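(* For any $n\ge1$, $1\le d\le n$ and any $\mathcal{A}\subseteq\{0,1\}^n$, \[ \big(\mathrm{OPT}(\mathsf{Del}(n,d;\mathcal{A}))\big)^{1/2}\le\mathrm{OPT}(\mathsf{Del}(n,d)). \]
   Context: Fourier transform: $\widehat{f}(\mathbf{s})=2^{-n}\sum_{\mathbf{x}\in\{0,1\}^n}f(\mathbf{x})(-1)^{\mathbf{x}\cdot\mathbf{s}}$. $w(\mathbf{x})$ is Hamming weight. $\mathrm{OPT}$ denotes the optimal value of an LP. $\mathsf{Del}(n,d)$: maximize $\sum_{\mathbf{x}}f(\mathbf{x})$ over $f:\{0,1\}^n\to\mathbb{R}$ subject to $f\ge0$, $\widehat f\ge0$, $f(\mathbf{x})=0$ whenever $1\le w(\mathbf{x})\le d-1$, $f(0^n)=1$. $\mathsf{Del}(n,d;\mathcal{A})$: maximize $\sum_{\mathbf{x}}f(\mathbf{x})$ over $f:\{0,1\}^n\to\mathbb{R}$ subject to (D1) $f\ge0$; (D2) $\widehat f\ge 0$; (D3) $f(\mathbf{x})=0$ whenever $1\le w(\mathbf{x})\le d-1$; (D4) $f(0^n)\le\mathrm{OPT}(\mathsf{Del}(n,d))$; (D5) $f(\mathbf{x})\le\sum_{\mathbf{z}}\mathds{1}_{\mathcal{A}}(\mathbf{z})\mathds{1}_{\mathcal{A}}(\mathbf{x}+\mathbf{z})$ for all $\mathbf{x}$ (addition over $\mathbb{F}_2^n$). *)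

(* Defs.v *)
From HB Require Import structures.
From mathcomp Require Import all_boot all_order all_algebra.
From mathcomp Require Import classical_sets reals.
Unset Printing Implicit Defensive.
Import Order.TTheory GRing.Theory Num.Theory.
Local Open Scope ring_scope.
Local Open Scope classical_set_scope.

Definition cube (n : nat) := {ffun 'I_n -> bool}.

Definition wt n (x : cube n) : nat := #|[set i | x i]|.

Definition zero_vec n : cube n := [ffun _ => false].

Definition addv n (x z : cube n) : cube n := [ffun i => x i (+) z i].

Definition dotb n (x s : cube n) : bool := odd #|[set i | x i && s i]|.

Definition fourier (R : realType) n (f : cube n -> R) (s : cube n) : R :=
  (2%:R ^+ n)^-1 * \sum_(x : cube n) f x * (-1) ^+ (dotb n x s).

Definition del_feas (R : realType) n d (f : cube n -> R) : Prop :=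
  [/\ (forall x, 0 <= f x),
      (forall s, 0 <= fourier R n f s),
      (forall x, (1 <= wt n x <= d - 1)%N -> f x = 0) &
      f (zero_vec n) = 1].

Definition opt_del (R : realType) n d : R :=
  sup [set \sum_(x : cube n) f x | f in [set f : cube n -> R | del_feas R n d f]].

Definition delA_feas (R : realType) n d (A : {set cube n}) (f : cube n -> R) : Prop :=
  [/\ (forall x, 0 <= f x),
      (forall s, 0 <= fourier R n f s),
      (forall x, (1 <= wt n x <= d - 1)%N -> f x = 0),
      f (zero_vec n) <= opt_del R n d &
      (forall x, f x <= \sum_(z : cube n) (z \in A)%:R * ((addv n x z) \in A)%:R)].

Definition opt_delA (R : realType) n d (A : {set cube n}) : R :=
  sup [set \sum_(x : cube n) f x | f in [set f : cube n -> R | delA_feas R n d A f]].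

(* Main.v *)
Require Import Defs.
From HB Require Import structures.
From mathcomp Require Import all_boot all_order all_algebra.
From mathcomp Require Import classical_sets reals.
Import Order.TTheory GRing.Theory Num.Theory.
Local Open Scope ring_scope.

Definition flipv n (i : 'I_n) (s : cube n) : cube n :=
  [ffun j => if j == i then ~~ s j else s j].

Arguments flipv {n}.
Lemma flipvK n i : involutive (@flipv n i).
Proof. move=> s; change (flipv i (flipv i s) = s :> {ffun 'I_n -> bool}); apply/ffunP=> j; rewrite !ffunE; by case: (j == i); rewrite ?negbK. Qed.

Lemma dotbE n (x y : cube n) : dotb n x y = odd #|[set j | x j && y j]|.
Proof. rewrite /dotb; congr odd; apply: eq_card=> j; by rewrite inE /in_mem /= /in_set boolp.asboolb. Qed.

Lemma dotb_flip n (x s : cube n) i : x i -> dotb n x (flipv i s) = ~~ dotb n x s.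
Proof.
move=> xi; rewrite !dotbE.
rewrite (cardsD1 i) [in RHS](cardsD1 i).
have -> : [set j | x j && flipv i s j] :\ i = [set j | x j && s j] :\ i.
  by apply/setP=> j; rewrite !inE ffunE; case: eqP.
rewrite !inE ffunE eqxx xi /=.
by case: (s i); rewrite /= ?oddS ?negbK.
Qed.

Lemma char_sum (R : realType) n (x : cube n) :
  \sum_(s : cube n) ((-1 : R) ^+ dotb n x s) = if x == zero_vec n then 2%:R ^+ n else 0.
Proof.
case: eqP=> [->|].
  rewrite (eq_bigr (fun _ => 1)); last first.
    move=> s _; rewrite dotbE.
    by rewrite (@eq_card _ _ pred0) ?card0 // => j; rewrite !inE ffunE.
  by rewrite sumr_const card_ffun card_bool card_ord -natrX.
move=> nz.
have [i xi] : exists i, x i.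
  case: (pickP (fun j => x j)) => [j xj|H]; first by exists j. exfalso; apply: nz.
  change (x = zero_vec n :> {ffun 'I_n -> bool}); apply/ffunP=> j; rewrite ffunE; exact: H.
set S := \sum_s _.
have : S = - S.
  rewrite {1}/S (reindex_inj (can_inj (@flipvK n i))) -sumrN.
  by apply: eq_bigr=> s _; rewrite dotb_flip //; case: (dotb n x s); rewrite ?expr1 ?expr0 ?opprK.
move/eqP; rewrite -subr_eq0 opprK -mulr2n -mulr_natr mulf_eq0 pnatr_eq0 orbF.
by move/eqP.
Qed.

Lemma fourier_sum (R : realType) n (f : cube n -> R) :
  \sum_s fourier R n f s = f (zero_vec n).
Proof.
rewrite /fourier -mulr_sumr exchange_big /=.
rewrite (eq_bigr (fun x => f x * (if x == zero_vec n then 2%:R ^+ n else 0))); last first.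
  by move=> x _; rewrite -mulr_sumr char_sum.
rewrite (bigD1 (zero_vec n)) //= eqxx big1 ?addr0; last first.
  by move=> x /negbTE ->; rewrite mulr0.
by rewrite mulrC -mulrA divff ?mulr1 // expf_neq0 // pnatr_eq0.
Qed.

Lemma dotb0 n (x : cube n) : dotb n x (zero_vec n) = false.
Proof. by rewrite dotbE (@eq_card _ _ pred0) ?card0 // => j; rewrite !inE ffunE andbF. Qed.

Lemma sum_le (R : realType) n (f : cube n -> R) :
  (forall s, 0 <= fourier R n f s) -> \sum_x f x <= 2%:R ^+ n * f (zero_vec n).
Proof.
move=> H; rewrite -fourier_sum [in X in _ <= X](bigD1 (zero_vec n)) //=.
have -> : fourier R n f (zero_vec n) = (2%:R ^+ n)^-1 * \sum_x f x.
  by rewrite /fourier; congr (_ * _); apply: eq_bigr=> x _; rewrite dotb0 expr0 mulr1.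
rewrite mulrDr mulrA divff ?mul1r ?expf_neq0 ?pnatr_eq0 //.
by rewrite lerDl mulr_ge0 ?exprn_ge0 ?ler0n // sumr_ge0.
Qed.

Lemma dotb0l n (s : cube n) : dotb n (zero_vec n) s = false.
Proof. by rewrite dotbE (@eq_card _ _ pred0) ?card0 // => j; rewrite !inE ffunE. Qed.

Lemma wt0 n : wt n (zero_vec n) = 0%N.
Proof. rewrite /wt (@eq_card _ _ pred0) ?card0 // => j; by rewrite inE /in_mem /= /in_set boolp.asboolb ffunE. Qed.

Local Open Scope classical_set_scope.

Theorem mainTheorem4 (R : realType) (n d : nat) (A : {set cube n}) :
  (1 <= n)%N -> (1 <= d <= n)%N ->
  Num.sqrt (opt_delA R n d A) <= opt_del R n d.
Proof.
move=> _ _.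
set M := opt_del R n d.
have hasub : has_ubound [set \sum_(x : cube n) f x | f in [set f : cube n -> R | del_feas R n d f]].
  exists (2%:R ^+ n) => y [f [H1 H2 H3 H4] <-].
  by have := @sum_le R n f H2; rewrite H4 mulr1.
have Mub : forall f, del_feas R n d f -> \sum_x f x <= M.
  by move=> f Hf; apply: ub_le_sup hasub _ _; exists f.
pose delta : cube n -> R := fun x => (x == zero_vec n)%:R.
have Hdelta : del_feas R n d delta.
  split.
  - by move=> x; rewrite ler0n.
  - move=> s; rewrite /fourier mulr_ge0 ?invr_ge0 ?exprn_ge0 ?ler0n //.
    rewrite (bigD1 (zero_vec n)) //= big1 ?addr0; last first.
      by move=> x /negbTE; rewrite /delta => ->; rewrite mul0r.
    by rewrite dotb0l /delta eqxx mul1r expr0 ler01.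
  - move=> x /andP [h1 _]; rewrite /delta; case: eqP=> // E.
    by move: h1; rewrite E wt0.
  - by rewrite /delta eqxx.
have M1 : 1 <= M.
  have := Mub _ Hdelta; rewrite (bigD1 (zero_vec n)) //= big1 ?addr0 /delta ?eqxx //.
  by move=> x /negbTE ->.
have M0 : 0 <= M by apply: le_trans M1; rewrite ler01.
have key : opt_delA R n d A <= M ^+ 2.
  apply: ge_sup.
    exists 0, (fun _ => 0); last by rewrite big1.
    split.
    - by move=> x.
    - by move=> s; rewrite /fourier big1 ?mulr0 // => x _; rewrite mul0r.
    - by [].
    - exact: M0.
    - by move=> x; rewrite sumr_ge0 // => z _; rewrite mulr_ge0 ?ler0n.
  move=> y [f [H1 H2 H3 H4 H5] <-].
  have sl := @sum_le R n f H2.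
  have [c0|cpos] := eqVneq (f (zero_vec n)) 0.
    apply: le_trans sl _; rewrite c0 mulr0; exact: exprn_ge0.
  have cgt : 0 < f (zero_vec n) by rewrite lt_neqAle eq_sym cpos H1.
  pose g := fun x => f x / f (zero_vec n).
  have Hg : del_feas R n d g.
    split.
    - by move=> x; rewrite /g divr_ge0.
    - move=> s; have -> : fourier R n g s = fourier R n f s / f (zero_vec n).
        rewrite /fourier /g -mulrA mulr_suml; congr (_ * _); apply: eq_bigr=> x _.
        by rewrite mulrAC.
      by rewrite divr_ge0.
    - by move=> x hx; rewrite /g H3 // mul0r.
    - by rewrite /g divff.
  have := Mub _ Hg; rewrite /g -mulr_suml ler_pdivrMr // => h.
  apply: le_trans h _; rewrite expr2 ler_wpM2l //.
have := key; rewrite -ler_sqrt ?exprn_ge0 // sqrtr_sqr ger0_norm //.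
Qed.
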